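(* Let $(\Gamma,\rho)$ be a voltage graph with $\Gamma$ strongly connected and $G$ a finite group. Then $(\Gamma,\rho)$ is structurally balanced if and only if $f(c)=\mathbf 1$ for every cycle $c$ of $\Gamma$.
   Context: $\Gamma=(V,E)$ simple digraph, $e_{ij}$ the edge $v_i\to v_j$, $\rho:E\to G$, $\mathbf 1$ the identity. Semi-walk $w=v_{i_1}a_1\dots a_{n-1}v_{i_n}$ with each $a_j\in\{e_{i_ji_{j+1}},e_{i_{j+1}i_j}\}$; walk if all $a_j=e_{i_ji_{j+1}}$; closed if $v_{i_1}=v_{i_n}$. A cycle is a closed walk with no repeated vertices except start equals end (a single vertex is a trivial cycle). Net voltage $f(w)=\bar\rho(a_1)\cdots\bar\rho(a_{n-1})$ with $\bar\rho(a_j)=\rho(a_j)$ for forward edges and $\rho(a_j)^{-1}$ for backward ones ($f=\mathbf 1$ on a single vertex). Structurally balanced: $f(w)=\mathbf 1$ for every closed semi-walk. Strongly connected: for every ordered pair of distinct vertices there is a walk from the first to the second. *)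

(* Defs.v *)
From mathcomp Require Import all_boot fingroup.
Set Implicit Arguments. Unset Strict Implicit. Unset Printing Implicit Defensive.
Local Open Scope group_scope.

(* A digraph on a finite vertex type V is a relation E : rel V
   (E u v  <=>  the edge u -> v exists). A voltage assignment
   rho : V -> V -> gT is only ever read on edges (rho u v = rho(e_uv)).

   A semi-walk starting at x is encoded by a sequence of steps (y, b):
   b = true  : traverse the edge prev -> y forward   (requires E prev y),
   b = false : traverse the edge y -> prev backward  (requires E y prev). *)

Section Voltage.
Variables (V : finType) (gT : finGroupType).
Variables (E : rel V) (rho : V -> V -> gT).

Fixpoint semiwalk (x : V) (s : seq (V * bool)) : bool :=
  match s with
  | [::] => true
  | (y, b) :: s' => (if b then E x y else E y x) && semiwalk y s'
  end.

Definition sw_end (x : V) (s : seq (V * bool)) : V := last x (map fst s).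

Definition is_walk (x : V) (s : seq (V * bool)) : bool :=
  semiwalk x s && all snd s.

Fixpoint net_voltage (x : V) (s : seq (V * bool)) : gT :=
  match s with
  | [::] => 1
  | (y, b) :: s' =>
      (if b then rho x y else (rho y x)^-1) * net_voltage y s'
  end.

(* cycle: closed walk with no repeated vertices except start = end;
   the empty step list is the trivial cycle *)
Definition is_cycle (x : V) (s : seq (V * bool)) : bool :=
  [&& is_walk x s, sw_end x s == x & uniq (map fst s)].

Definition structurally_balanced : Prop :=
  forall x s, semiwalk x s -> sw_end x s = x -> net_voltage x s = 1.

Definition strongly_connected : Prop :=
  forall u v : V, u != v ->
    exists s, is_walk u s /\ sw_end u s = v.

End Voltage.

(* Main.v *)
Require Import Defs.
From mathcomp Require Import all_boot fingroup zify.
Local Open Scope group_scope.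

Section Aux.
Variables (V : finType) (gT : finGroupType).
Variables (E : rel V) (rho : V -> V -> gT).

Lemma semiwalk_cat (x : V) s1 s2 :
  semiwalk E x (s1 ++ s2) = semiwalk E x s1 && semiwalk E (sw_end x s1) s2.
Proof.
elim: s1 x => [|[y b] s IH] x //=.
by rewrite IH /sw_end /= andbA.
Qed.

Lemma sw_end_cat (x : V) (s1 s2 : seq (V * bool)) : sw_end x (s1 ++ s2) = sw_end (sw_end x s1) s2.
Proof. by rewrite /sw_end map_cat last_cat. Qed.

Lemma nv_cat (x : V) s1 s2 :
  net_voltage rho x (s1 ++ s2) = net_voltage rho x s1 * net_voltage rho (sw_end x s1) s2.
Proof.
elim: s1 x => [|[y b] s IH] x /=; first by rewrite mul1g.
by rewrite IH mulgA.
Qed.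

Lemma walk_cat (x : V) s1 s2 :
  is_walk E x (s1 ++ s2) = is_walk E x s1 && is_walk E (sw_end x s1) s2.
Proof.
rewrite /is_walk semiwalk_cat all_cat.
by case: (semiwalk _ _ s1); case: (semiwalk _ _ s2); case: (all snd s1).
Qed.

Lemma last_take_nth (x : V) (t : seq V) k :
  (k < size t)%N -> last x (take k.+1 t) = nth x t k.
Proof.
elim: t x k => [|a t IH] x [|k] //= Hk; first by rewrite take0.
by rewrite IH //; apply: set_nth_default.
Qed.

Lemma sw_end_take (x : V) (s : seq (V * bool)) k : (k < size s)%N -> sw_end x (take k.+1 s) = nth x (map fst s) k.
Proof.
move=> Hk; rewrite /sw_end map_take last_take_nth //.
by rewrite size_map.
Qed.

Hypothesis Hcyc : forall x s, is_cycle E x s -> net_voltage rho x s = 1.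

Lemma closed_walk_nv n : forall (x : V) s, (size s <= n)%N -> is_walk E x s ->
  sw_end x s = x -> net_voltage rho x s = 1.
Proof.
elim: n => [|n IH] x s Hs Hw He.
  by move: Hs; rewrite leqn0 => /nilP ->.
case Hu: (uniq (map fst s)).
  by apply: Hcyc; rewrite /is_cycle Hw He eqxx Hu.
move/negbT: Hu => /(uniqPn x) [i [j [Hij Hj Heq]]].
rewrite size_map in Hj.
have Hi : i < size s by apply: ltn_trans Hj.
set s1 := take i.+1 s.
set r := drop i.+1 s.
set s2 := take (j - i) r.
set s3 := drop (j - i) r.
have Hdec : s = s1 ++ s2 ++ s3 by rewrite /s2 /s3 cat_take_drop /s1 /r cat_take_drop.
have H12 : s1 ++ s2 = take j.+1 s.
  by rewrite /s1 /s2 /r -takeD addSn subnKC // ltnW.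
have E1 : sw_end x s1 = nth x (map fst s) i by rewrite sw_end_take.
have E2 : sw_end (sw_end x s1) s2 = sw_end x s1.
  by rewrite -sw_end_cat H12 sw_end_take // E1 Heq.
have Hi1 : (i.+1 < size s)%N by apply: leq_ltn_trans Hij Hj.
have Hs1 : size s1 = i.+1 by rewrite size_take Hi1.
have Hs2 : size s2 = j - i.
  by rewrite size_take size_drop; case: ltnP => //; lia.
have Hsz : size s = i.+1 + (j - i) + size s3.
  by rewrite {1}Hdec !size_cat Hs1 Hs2 addnA.
move: Hw He; rewrite Hdec walk_cat walk_cat => /andP [Hw1 /andP [Hw2 Hw3]].
rewrite sw_end_cat sw_end_cat E2 => He.
rewrite nv_cat nv_cat E2.
rewrite (IH (sw_end x s1) s2); last first.
- exact: E2.
- exact: Hw2.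
- rewrite Hs2; move: Hs; rewrite Hsz; lia.
- rewrite mul1g -nv_cat.
apply: IH.
- rewrite size_cat Hs1; move: Hs; rewrite Hsz; lia.
- by rewrite walk_cat Hw1 -E2.
- by rewrite sw_end_cat.
Qed.
End Aux.

Theorem corollary1 (V : finType) (gT : finGroupType)
    (E : rel V) (rho : V -> V -> gT)
    (Hsimple : irreflexive E)
    (Hsc : strongly_connected E) :
  structurally_balanced E rho <->
  (forall x s, is_cycle E x s -> net_voltage rho x s = 1).
Proof.
split.
  move=> Hb x s /and3P [Hw /eqP He _]; apply: Hb => //.
  by case/andP: Hw.
move=> Hcyc.
have CW : forall x s, is_walk E x s -> sw_end x s = x -> net_voltage rho x s = 1.
  move=> x s; move: (@closed_walk_nv V gT E rho Hcyc (size s) x s (leqnn _)); exact.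
have Back : forall u v, E u v -> exists P, [/\ is_walk E v P, sw_end v P = u &
    net_voltage rho v P = (rho u v)^-1].
  move=> u v Euv.
  have Hne : v != u by apply/eqP => Heq; rewrite Heq Hsimple in Euv.
  have [P [HP HPe]] := Hsc v u Hne.
  exists P; split => //.
  have H1 : net_voltage rho u ((v, true) :: P) = 1.
    apply: CW => //. by rewrite /is_walk /= Euv; case/andP: HP => -> ->.
  move: H1 => /= H1.
  by rewrite -(mulKg (rho u v) (net_voltage rho v P)) H1 mulg1.
have Conv : forall s x, semiwalk E x s -> exists t, [/\ is_walk E x t,
    sw_end x t = sw_end x s & net_voltage rho x t = net_voltage rho x s].
  elim=> [|[y b] s IH] x /=.
    by move=> _; exists [::].
  case/andP=> Hxy Hs.
  have [t [Ht Hte Htv]] := IH y Hs.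
  case: b Hxy => Hxy.
    exists ((y, true) :: t); split.
    - by rewrite /is_walk /= Hxy; case/andP: Ht => -> ->.
    - by rewrite /sw_end /= -/(sw_end y t) Hte.
    - by rewrite /= Htv.
  have [P [HP HPe HPv]] := Back y x Hxy.
  exists (P ++ t); split.
  - by rewrite walk_cat HP HPe Ht.
  - by rewrite sw_end_cat HPe Hte.
  - by rewrite nv_cat HPe HPv Htv.
move=> x s Hs He.
have [t [Ht Hte Htv]] := Conv s x Hs.
by rewrite -Htv; apply: CW; rewrite // Hte.
Qed.
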